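(* Let $K$ be a field of characteristic $0$, $e\ge2$, $A,B\in M_e(K)$ and $d\in(\mathbb{Z}/e\mathbb{Z})^\times$. Then $\mathrm{Char}_X(B\overset{d}{\ast}A)=\mathrm{Char}_X(A\overset{d^{-1}}{\ast}B)$, where $\mathrm{Char}_X$ denotes the characteristic polynomial.
   Context: For $A=[a_{i,j}],B=[b_{i,j}]\in M_e(K)$ (indices modulo $e$) and $d\in(\mathbb{Z}/e\mathbb{Z})\setminus\{0\}$, the $d$-composition is $A\overset{d}{\ast}B=\big[\sum_{s=0}^{e-1}\sum_{t=0}^{e-1}a_{s,t}b_{ds+i,dt+j}\big]_{0\le i,j\le e-1}$. *)

(* Defs.v *)
From mathcomp Require Import all_boot all_algebra.
Set Implicit Arguments. Unset Strict Implicit. Unset Printing Implicit Defensive.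
Import GRing.Theory.
Local Open Scope ring_scope.

Definition modidx (e : nat) (d s : nat) (i : 'I_e) : 'I_e :=
  Ordinal (ltn_pmod (d * s + i)%N (leq_ltn_trans (leq0n i) (ltn_ord i))).

Definition dcomp (K : pzRingType) (e : nat) (d : nat) (A B : 'M[K]_e) : 'M[K]_e :=
  \matrix_(i < e, j < e)
     \sum_(s < e) \sum_(t < e) A s t * B (modidx d s i) (modidx d t j).

(* Main.v *)
Require Import Defs.
From mathcomp Require Import all_boot all_algebra fingroup perm zify.
Import GRing.Theory.
Local Open Scope ring_scope.

Lemma det_conj_perm (R : comNzRingType) n (s : 'S_n) (M : 'M[R]_n) :
  \det (\matrix_(i, j) M (s i) (s j)) = \det M.
Proof.
have -> : \matrix_(i, j) M (s i) (s j) = perm_mx s *m M *m perm_mx s^-1.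
  by rewrite -row_permE -col_permE; apply/matrixP => i j; rewrite !mxE.
rewrite !det_mulmx mulrC mulrA -det_mulmx -perm_mxM mulVg perm_mx1 det1 mul1r.
by [].
Qed.

Lemma char_poly_conj_perm (R : comNzRingType) n (s : 'S_n) (M : 'M[R]_n) :
  char_poly (\matrix_(i, j) M (s i) (s j)) = char_poly M.
Proof.
rewrite /char_poly -(det_conj_perm _ _ s (char_poly_mx M)); congr (\det _).
by apply/matrixP => i j; rewrite !mxE (inj_eq (@perm_inj _ s)).
Qed.

Section Main.
Variables (e dn dn' : nat) (he : (0 < e)%N) (hd : ((dn * dn') %% e = 1)%N).

Lemma mod_cancel x : ((dn' * ((dn * x) %% e)) %% e = x %% e)%N.
Proof. by rewrite modnMmr mulnA -modnMml [(dn' * dn)%N]mulnC hd mul1n. Qed.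

Definition sig_f (i : 'I_e) : 'I_e := Ordinal (ltn_pmod (dn * (e - i)) he).

Lemma sig_inj : injective sig_f.
Proof.
have K (i : 'I_e) : ((e - (dn' * sig_f i) %% e) %% e = i)%N.
  rewrite /= mod_cancel; have := ltn_ord i => ie.
  have [->|ip] := posnP i; first by rewrite subn0 modnn subn0 modnn.
  rewrite [((e - i) %% e)%N]modn_small; last by lia.
  by rewrite (_ : e - (e - i) = i)%N ?modn_small //; lia.
by move=> i j /(congr1 (fun k : 'I_e => (e - (dn' * k) %% e) %% e)%N); rewrite !K => /val_inj.
Qed.

Definition sig := perm sig_inj.

Lemma modidx_cancel (i : 'I_e) (s : 'I_e) :
  modidx dn (modidx dn' s i) (sig i) = s.
Proof.
apply/val_inj; rewrite /= permE /= modnDmr -modnDml modnMmr modnDml.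
have -> : (dn * (dn' * s + i) + dn * (e - i) = dn * dn' * s + dn * e)%N.
  rewrite -mulnDr -addnA subnKC; last exact: ltnW.
  by rewrite mulnDr mulnA.
by rewrite addnC modnMDl -modnMml hd mul1n modn_small.
Qed.
End Main.

Theorem corollary3p2 (K : fieldType) (e : nat) (he : (2 <= e)%N)
  (hchar : [pchar K] =i pred0)
  (A B : 'M[K]_e) (d : {unit 'Z_e}) :
  char_poly (dcomp (val (val d)) B A) = char_poly (dcomp (val (val (d^-1)%g)) A B).
Proof.
case: e he A B d => [|[|n]] // _ A B d.
set dn := val (val d); set dn' := val (val (d^-1)%g).
have hd : ((dn' * dn) %% n.+2 = 1)%N.
  rewrite mulnC.
  by have := mulrV (valP d); move=> /(congr1 val) /=.
have he : (0 < n.+2)%N by [].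
rewrite -[RHS](char_poly_conj_perm _ _ (@sig _ dn' dn he hd)); congr char_poly.
apply/matrixP => i j; rewrite !mxE.
have inj (k : 'I_n.+2) : injective (fun s : 'I_n.+2 => modidx dn s k).
  have c : cancel (fun s : 'I_n.+2 => modidx dn s k) (fun u => modidx dn' u (@sig _ dn' dn he hd k)).
    by move=> s; apply: modidx_cancel.
  exact: can_inj c.
rewrite [RHS](reindex_inj (inj i)) /=.
apply: eq_bigr => s _.
rewrite [RHS](reindex_inj (inj j)) /=.
apply: eq_bigr => t _.
by rewrite !modidx_cancel // mulrC.
Qed.
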